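(* For all integers $a,b\ge1$, \[ 1+\frac{(2^a-1)(2^b-1)}{(2^{\gcd(a,b)}-1)\,2^{(a+b)/2}}>2^{(a+b)/2-\gcd(a,b)}. \] *)

(* Defs.v *)
From Stdlib Require Import Reals Arith.

(* Main.v *)
Require Import Defs.
From Stdlib Require Import Reals Arith Lra Psatz.
Open Scope R_scope.

Theorem lemma3 (a b : nat) (ha : (1 <= a)%nat) (hb : (1 <= b)%nat) :
  1 + ((2 ^ a - 1) * (2 ^ b - 1)) /
        ((2 ^ (Nat.gcd a b) - 1) * Rpower 2 (INR (a + b) / 2))
  > Rpower 2 (INR (a + b) / 2 - INR (Nat.gcd a b)).
Proof.
  pose (d := Nat.gcd a b); fold d.
  pose (S := Rpower 2 (INR (a + b) / 2)); fold S.
  assert (HSS : S * S = 2 ^ a * 2 ^ b).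
  { unfold S; rewrite <- Rpower_plus.
    replace (INR (a + b) / 2 + INR (a + b) / 2) with (INR (a + b)) by lra.
    rewrite Rpower_pow by lra. apply pow_add. }
  assert (HS1 : 1 < S).
  { unfold S; rewrite <- (Rpower_O 2) at 1 by lra.
    apply Rpower_lt; [lra|]. apply Rdiv_lt_0_compat; [|lra].
    apply lt_0_INR; lia. }
  assert (HR : Rpower 2 (INR (a + b) / 2 - INR d) = S * / 2 ^ d).
  { unfold Rminus; rewrite Rpower_plus, Rpower_Ropp, Rpower_pow by lra. reflexivity. }
  rewrite HR.
  assert (hda : (d <= a)%nat).
  { apply Nat.divide_pos_le; [lia|]. apply Nat.gcd_divide_l. }
  assert (hdb : (d <= b)%nat).
  { apply Nat.divide_pos_le; [lia|]. apply Nat.gcd_divide_r. }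
  assert (hd1 : (1 <= d)%nat).
  { destruct d eqn:E; [|lia]. apply Nat.gcd_eq_0 in E. lia. }
  assert (HX : 2 ^ d <= 2 ^ a) by (apply Rle_pow; lra || lia).
  assert (HY : 2 ^ d <= 2 ^ b) by (apply Rle_pow; lra || lia).
  assert (HD : 2 <= 2 ^ d).
  { replace 2 with (2 ^ 1) at 1 by ring. apply Rle_pow; lra || lia. }
  remember (2 ^ a) as X eqn:EX; remember (2 ^ b) as Y eqn:EY; remember (2 ^ d) as D eqn:ED.
  apply Rlt_gt.
  assert (Hpos : 0 < D * (D - 1) * S).
  { apply Rmult_lt_0_compat; [apply Rmult_lt_0_compat|]; lra. }
  apply (Rmult_lt_reg_r (D * (D - 1) * S)); [exact Hpos|].
  replace (S * / D * (D * (D - 1) * S)) with ((D - 1) * (S * S)) by (field; lra).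
  replace ((1 + (X - 1) * (Y - 1) / ((D - 1) * S)) * (D * (D - 1) * S))
    with (D * (D - 1) * S + D * (X - 1) * (Y - 1)) by (field; lra).
  rewrite HSS.
  assert (0 <= (X - D) * (Y - D)) by (apply Rmult_le_pos; lra).
  assert (0 < D * (D - 1) * (S - 1)) by (apply Rmult_lt_0_compat; [apply Rmult_lt_0_compat|]; lra).
  nra.
Qed.
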